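(* Let $n=p'q$ where $p',q$ are distinct primes both at least $7$, and let $A=L(n;p')$. Then $D_A(n)=4$.
   Context: $\mathbb{Z}_n$ is the integers mod $n$, $U(n)$ its unit group. For nonempty $A\subseteq\mathbb{Z}_n\setminus\{0\}$, a sequence $(x_1,\ldots,x_k)$ is an $A$-weighted zero-sum sequence if $\sum a_ix_i=0$ for some $a_i\in A$; $D_A(n)$ is the least $k$ such that every length-$k$ sequence in $\mathbb{Z}_n$ has a nonempty $A$-weighted zero-sum subsequence. For odd $n=\prod p_i^{r_i}$, a prime $p\mid n$ and $a\in U(n)$, $\left(\frac{a}{p}\right)$ is the Legendre symbol of the image of $a$ in $\mathbb{Z}_p$ and $\left(\frac{a}{n}\right)=\prod\left(\frac{a}{p_i}\right)^{r_i}$. For a prime divisor $p'$ of $n$, $L(n;p')=\{a\in U(n): \left(\frac{a}{n}\right)=\left(\frac{a}{p'}\right)\}$. *)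

(* Defs.v *)
(* Z_n is represented by 'I_n (residues 0..n-1), arithmetic mod n. *)
From mathcomp Require Import all_boot all_order all_algebra.
Set Implicit Arguments. Unset Strict Implicit. Unset Printing Implicit Defensive.
Import GRing.Theory.
Local Open Scope ring_scope.

Definition is_sq_mod (p a : nat) : bool :=
  [exists x : 'I_p, (x * x %% p == a %% p)%N].

Definition legendre (p a : nat) : int :=
  if (p %| a)%N then 0 else if is_sq_mod p a then 1 else -1.

Definition jacobi (n a : nat) : int :=
  \prod_(p <- primes n) (legendre p a) ^+ (logn p n).

Definition unitZn (n : nat) (a : 'I_n) : bool := coprime a n.

Definition Lset (n p' : nat) : pred 'I_n :=
  fun a => unitZn a && (jacobi n a == legendre p' a).

Definition has_Azs (n : nat) (A : pred 'I_n) (k : nat) (x : 'I_k -> 'I_n) : Prop :=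
  exists (I : {set 'I_k}) (w : 'I_k -> 'I_n),
    I != set0 /\ (forall i, i \in I -> A (w i)) /\
    ((\sum_(i in I) (w i : nat) * (x i : nat)) %% n = 0)%N.

Definition DA_prop (n : nat) (A : pred 'I_n) (k : nat) : Prop :=
  forall x : 'I_k -> 'I_n, has_Azs A x.

Definition DA_is (n : nat) (A : pred 'I_n) (k : nat) : Prop :=
  DA_prop A k /\ forall k', DA_prop A k' -> (k <= k')%N.

Arguments Lset : clear implicits.
Arguments DA_is : clear implicits.
Arguments DA_prop : clear implicits.

(* Main.v *)
Require Import Defs.
From mathcomp Require Import all_boot all_order all_algebra.
From mathcomp Require Import ring.
Set Implicit Arguments. Unset Strict Implicit. Unset Printing Implicit Defensive.
Import GRing.Theory.
Local Open Scope ring_scope.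

Section Sq.
Variable F : finFieldType.

Definition sq (x : F) := [exists y, x == y ^+ 2].

Lemma sqP x : reflect (exists y, x = y ^+ 2) (sq x).
Proof.
by apply: (iffP existsP) => [[y /eqP ->]|[y ->]]; exists y.
Qed.

Lemma sqX2 x : sq (x ^+ 2). Proof. by apply/sqP; exists x. Qed.

Lemma sqM x y : sq x -> sq y -> sq (x * y).
Proof. by move=> /sqP[a ->] /sqP[b ->]; apply/sqP; exists (a * b); rewrite exprMn. Qed.

Lemma sqV x : sq x -> sq x^-1.
Proof. by move=> /sqP[a ->]; apply/sqP; exists a^-1; rewrite exprVn. Qed.

Definition rt (z : F) := odflt 0 [pick y | z == y ^+ 2].

Lemma rtK z : sq z -> rt z ^+ 2 = z.
Proof.
rewrite /rt; case: pickP => [y /eqP -> //| H /sqP[y e]].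
by move: (H y); rewrite e eqxx.
Qed.

Lemma sq_card : (#|[set x : F | ~~ sq x]| <= #|[set x : F | (x != 0%R) && sq x]|)%N.
Proof.
pose f x := (x ^+ 2, x == rt (x ^+ 2)).
have finj : injective f.
  move=> x y [e1 e2].
  have : (x == y) || (x == - y) by rewrite -eqf_sqr e1.
  case/orP=> [/eqP //| /eqP exy].
  have hr : rt (y ^+ 2) ^+ 2 = y ^+ 2 by apply: rtK; apply: sqX2.
  move: e2; rewrite e1.
  have : (rt (y ^+ 2) == y) || (rt (y ^+ 2) == - y) by rewrite -eqf_sqr hr.
  case/orP=> /eqP ->; rewrite exy eqxx.
    by move/eqP.
  by move/esym/eqP => <-.
set Q := [set x : F | (x != 0) && sq x].
set N := [set x : F | ~~ sq x].
have h1 : #|[set x : F | x != 0]| = (#|Q| + #|N|)%N.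
  rewrite -cardsUI.
  have -> : Q :&: N = set0.
    by apply/setP=> x; rewrite !inE; case: (sq x); rewrite ?andbF ?andbT.
  rewrite cards0 addn0; apply: eq_card => x; rewrite !inE.
  case: (boolP (x == 0)) => [/eqP -> | _] /=; last by case: (sq x).
  by rewrite (_ : sq 0) //; apply/sqP; exists 0; rewrite expr0n.
have h2 : #|[set x : F | x != 0]| = #|f @: [set x : F | x != 0]|.
  by rewrite card_imset.
have h3 : f @: [set x : F | x != 0] \subset setX Q [set: bool].
  apply/subsetP=> z /imsetP[x]; rewrite !inE => xn0 ->.
  by rewrite /= sqrf_eq0 xn0 sqX2.
move: (subset_leq_card h3); rewrite -h2 h1 cardsX cardsT card_bool muln2 -addnn.
by rewrite leq_add2l.
Qed.

Lemma nsq_mul n m : ~~ sq n -> ~~ sq m -> sq (n * m).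
Proof.
move=> hn hm.
have n0 : n != 0 by apply: contra hn => /eqP ->; apply/sqP; exists 0; rewrite expr0n.
set Q := [set x : F | (x != 0) && sq x].
set N := [set x : F | ~~ sq x].
have sub : [set n * s | s in Q] \subset N.
  apply/subsetP=> z /imsetP[s]; rewrite !inE => /andP[s0 ss] ->.
  apply: contra hn => hns.
  have -> : n = (n * s) * s^-1 by rewrite -mulrA mulfV // mulr1.
  by apply: sqM => //; apply: sqV.
have e : [set n * s | s in Q] = N.
  apply/eqP; rewrite eqEcard sub card_imset; last by apply: mulfI.
  exact: sq_card.
have : m \in N by rewrite inE.
rewrite -e => /imsetP[s]; rewrite inE => /andP[_ ss] ->.
by rewrite mulrA -expr2; apply: sqM => //; apply: sqX2.
Qed.

Hypothesis h2 : (2%:R : F) != 0.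

Lemma exists_nonsq : exists z, ~~ sq z.
Proof.
case: (boolP [exists z, ~~ sq z]) => [/existsP //| /existsPn H].
have Hs z : sq z by move: (H z); rewrite negbK.
have rinj : injective rt by apply: (can_inj (g := fun y => y ^+ 2)) => z; apply: rtK.
have [g rg gr] := injF_bij rinj.
have e1 : g 1 = 1 by rewrite -(rtK (Hs (g 1))) gr expr1n.
have e2 : g (-1) = 1 by rewrite -(rtK (Hs (g (-1)))) gr sqrrN expr1n.
have : (1 : F) = -1 by rewrite -[1 in LHS]gr -[-1]gr e1 e2.
move=> e; move: h2; rewrite mulr2n {1}e addNr eqxx //.
Qed.

Hypothesis h3 : (3%:R : F) != 0.
Hypothesis h5 : (5%:R : F) != 0.
Hypothesis hcast : forall x : F, exists k : nat, x = k%:R.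

Section S.
Variable e : F.
Hypothesis e0 : e != 0.
Definition Se (z : F) := exists x y, [/\ x != 0, y != 0 & z = x ^+ 2 + e * y ^+ 2].

Lemma Se_scale z s : Se z -> s != 0 -> Se (s ^+ 2 * z).
Proof.
move=> [x [y [x0 y0 ->]]] s0; exists (s * x), (s * y); split; try by rewrite mulf_neq0.
by rewrite !exprMn; ring.
Qed.

Lemma Se_all : (exists u, [/\ Se u, u != 0 & sq u]) -> (exists v, Se v /\ ~~ sq v) ->
  forall d, d != 0 -> Se d.
Proof.
move=> [u [Su u0 /sqP[w ew]]] [v [Sv vn]] d d0.
have w0 : w != 0 by apply: contraNneq u0 => w0; rewrite ew w0 expr0n.
have v0 : v != 0 by apply: contra vn => /eqP ->; apply/sqP; exists 0; rewrite expr0n.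
case: (boolP (sq d)) => [/sqP[t et] | dn].
  have t0 : t != 0 by apply: contraNneq d0 => t0; rewrite et t0 expr0n.
  have -> : d = (t / w) ^+ 2 * u by rewrite ew expr_div_n mulfVK ?sqrf_eq0.
  by apply: Se_scale => //; rewrite mulf_neq0 ?invr_eq0.
have : sq (d * v^-1).
  apply: nsq_mul => //; apply: contra vn => /sqV; rewrite invrK //.
case/sqP=> t et.
have t0 : t != 0.
  apply: contraNneq d0 => t0.
  have : d * v^-1 = 0 by rewrite et t0 expr0n.
  by move/eqP; rewrite mulf_eq0 invr_eq0 (negbTE v0) orbF.
have -> : d = t ^+ 2 * v by rewrite -et -mulrA mulVf // mulr1.
by apply: Se_scale.
Qed.

Lemma two0 : (4%:R : F) != 0.
Proof. have -> : (4%:R : F) = 2%:R * 2%:R by rewrite -natrM. by rewrite mulf_neq0. Qed.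

Lemma Se_full d : d != 0 -> Se d.
Proof.
case: (boolP (sq e)) => [/sqP[f ef] | en].
  have f0 : f != 0 by apply: contraNneq e0 => f0; rewrite ef f0 expr0n.
  apply: Se_all.
    exists (5%:R ^+ 2); split; last by apply: sqX2.
      exists 3%:R, (4%:R / f); split => //; first by rewrite mulf_neq0 ?invr_eq0 ?two0.
      by rewrite ef; field.
    by rewrite sqrf_eq0.
  have key : forall k : nat, sq k%:R \/ exists v, Se v /\ ~~ sq v.
    elim => [|k [hk|]]; [by left; apply/sqP; exists 0; rewrite expr0n | | by right].
    case: (boolP (sq k.+1%:R)) => [ |hn]; [by left | right].
    exists k.+1%:R; split => //.
    case: (boolP (k%:R == 0 :> F)) => [/eqP k0 | k0].
      by move: hn; rewrite mulrSr k0 add0r; case/negP; apply/sqP; exists 1; rewrite expr1n.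
    case/sqP: hk => t et.
    have t0 : t != 0 by apply: contraNneq k0 => t0; rewrite et t0 expr0n.
    exists t, f^-1; split => //; first by rewrite invr_eq0.
    by rewrite mulrSr et ef; field.
  have [z zn] := exists_nonsq.
  have [k ek] := hcast z.
  by case: (key k) => [|//]; rewrite -ek (negbTE zn).
have [z [Sz z0]] : exists z, Se z /\ z != 0.
  case: (boolP (1 + e == 0)) => [/eqP he | he].
    have em : e = -1 by apply/eqP; rewrite -addr_eq0 addrC he.
    exists (1 + e * 2%:R ^+ 2); split.
      by exists 1, 2%:R; split => //; [apply: oner_neq0 | rewrite expr1n].
    have -> : 1 + e * 2%:R ^+ 2 = - 3%:R :> F by rewrite em; ring.
    by rewrite oppr_eq0.
  by exists (1 + e); split => //; exists 1, 1; split => //; rewrite ?oner_neq0 // expr1n mulr1.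
have Sez : Se (e * z).
  move: Sz => [x [y [x0 y0 ->]]]; exists (e * y), x; split => //; first by rewrite mulf_neq0.
  by ring.
have ez0 : e * z != 0 by rewrite mulf_neq0.
apply: Se_all.
  case: (boolP (sq z)) => hz; first by exists z.
  by exists (e * z); split => //; apply: nsq_mul.
case: (boolP (sq z)) => hz; last by exists z.
exists (e * z); split => //; apply: contra en => h.
have -> : e = (e * z) * z^-1 by rewrite mulfK.
by apply: sqM => //; apply: sqV.
Qed.
End S.

Lemma KL (a b d : F) : a != 0 -> b != 0 -> d != 0 ->
  exists x y, [/\ x != 0, y != 0 & x ^+ 2 * a + y ^+ 2 * b = d].
Proof.
move=> a0 b0 d0.
have [x [y [x0 y0 e]]] := Se_full (mulf_neq0 b0 (invr_neq0 a0)) (mulf_neq0 d0 (invr_neq0 a0)).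
exists x, y; split => //.
have -> : d = d / a * a by rewrite mulfVK.
by rewrite e; field.
Qed.
End Sq.

Lemma sum_red (R : nmodType) (T : finType) (J : {set T}) (a : T -> bool) (f : T -> R) :
  (forall j, ~~ a j -> f j = 0) ->
  \sum_(j in J) f j = \sum_(j in [set j in J | a j]) f j.
Proof.
move=> h; rewrite [RHS]big_mkcond [LHS]big_mkcond; apply: eq_bigr => j _.
rewrite inE; case: (j \in J) => //=; case: (boolP (a j)) => // /h ->.
by [].
Qed.

Lemma Pset (F : fieldType) (T : finType) (J : {set T}) (a : T -> F) :
  (2%:R : F) != 0 -> #|[set j in J | a j != 0]| != 1%N ->
  exists u : T -> F, (forall j, u j != 0) /\ \sum_(j in J) u j * a j = 0.
Proof.
move=> h2 hK.
set K := [set j in J | a j != 0] in hK *.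
have red u : \sum_(j in J) u j * a j = \sum_(j in K) u j * a j.
  by apply: sum_red => j; rewrite negbK => /eqP ->; rewrite mulr0.
case: (posnP #|K|) => [/cards0_eq K0 | Kpos].
  exists (fun _ => 1); split => [j|]; first exact: oner_neq0.
  by rewrite red K0 big_set0.
have : (1 < #|K|)%N by rewrite ltn_neqAle eq_sym hK Kpos.
case/card_gt1P => j0 [j1 [j0K j1K j01]].
have a0 : a j0 != 0 by move: j0K; rewrite inE => /andP[].
have a1 : a j1 != 0 by move: j1K; rewrite inE => /andP[].
set S1 := \sum_(i | (i \in K) && (i != j0) && (i != j1)) a i.
pose t : F := if S1 + a j1 != 0 then 1 else 2%:R.
have t0 : t != 0 by rewrite /t; case: ifP => _; rewrite ?oner_neq0.
have T0 : S1 + t * a j1 != 0.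
  rewrite /t; case: ifP => [|/negbFE/eqP h]; first by rewrite mul1r.
  have -> : S1 = - a j1 by apply/eqP; rewrite -addr_eq0 h.
  have -> : - a j1 + 2%:R * a j1 = a j1 by ring.
  done.
exists (fun j => if j == j0 then - (S1 + t * a j1) / a j0 else if j == j1 then t else 1).
split.
  move=> j; case: ifP => _; last by case: ifP => _; rewrite ?oner_neq0.
  by rewrite mulf_neq0 ?oppr_eq0 ?invr_eq0.
rewrite red (bigD1 j0) //= eqxx (bigD1 j1) /=; last by rewrite j1K eq_sym.
have j10 : j1 != j0 by rewrite eq_sym.
rewrite (negbTE j10) eqxx.
under eq_bigr => i /andP[/andP[_ /negbTE ->] /negbTE ->] do rewrite mul1r.
rewrite -/S1 mulfVK //; ring.
Qed.

Lemma Qset (F : finFieldType) (T : finType) (J : {set T}) (b : T -> F) :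
  (2%:R : F) != 0 -> (3%:R : F) != 0 -> (5%:R : F) != 0 ->
  (forall x : F, exists k : nat, x = k%:R) ->
  (#|[set j in J | b j != 0]| == 0%N) || (2 < #|[set j in J | b j != 0%R]|)%N ->
  exists r : T -> F, (forall j, r j != 0) /\ \sum_(j in J) r j ^+ 2 * b j = 0.
Proof.
move=> h2 h3 h5 hcast hK.
set K := [set j in J | b j != 0] in hK *.
have red u : \sum_(j in J) u j ^+ 2 * b j = \sum_(j in K) u j ^+ 2 * b j.
  by apply: sum_red => j; rewrite negbK => /eqP ->; rewrite mulr0.
case/orP: hK => [/eqP/cards0_eq K0 | /card_gt2P].
  exists (fun _ => 1); split => [j|]; first exact: oner_neq0.
  by rewrite red K0 big_set0.
move=> [j0 [j1 [j2 [[j0K j1K j2K] [j01 j12 j20]]]]].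
have b0 : b j0 != 0 by move: j0K; rewrite inE => /andP[].
have b1 : b j1 != 0 by move: j1K; rewrite inE => /andP[].
have b2 : b j2 != 0 by move: j2K; rewrite inE => /andP[].
set S1 := \sum_(i | (i \in K) && (i != j0) && (i != j1) && (i != j2)) b i.
pose t : F := if S1 + b j2 != 0 then 1 else 2%:R.
have t0 : t != 0 by rewrite /t; case: ifP => _; rewrite ?oner_neq0.
have T0 : S1 + t ^+ 2 * b j2 != 0.
  rewrite /t; case: ifP => [|/negbFE/eqP h]; first by rewrite expr1n mul1r.
  have -> : S1 = - b j2 by apply/eqP; rewrite -addr_eq0 h.
  have -> : - b j2 + 2%:R ^+ 2 * b j2 = 3%:R * b j2 by ring.
  by rewrite mulf_neq0.
have T0' : - (S1 + t ^+ 2 * b j2) != 0 by rewrite oppr_eq0.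
have [x [y [x0 y0 exy]]] := KL h2 h3 h5 hcast b0 b1 T0'.
exists (fun j => if j == j0 then x else if j == j1 then y else if j == j2 then t else 1).
split.
  by move=> j; do 3! (case: ifP => _ //); apply: oner_neq0.
have j10 : j1 != j0 by rewrite eq_sym.
have j21 : j2 != j1 by rewrite eq_sym.
have j02 : j0 != j2 by rewrite eq_sym.
rewrite red (bigD1 j0) //= eqxx (bigD1 j1) /=; last by rewrite j1K j10.
rewrite (negbTE j10) eqxx (bigD1 j2) /=; last by rewrite j2K j20 j21.
rewrite (negbTE j20) (negbTE j21) eqxx.
under eq_bigr => i /andP[/andP[/andP[_ /negbTE ->] /negbTE ->] /negbTE ->] do rewrite expr1n mul1r.
rewrite -/S1 !addrA exy; ring.
Qed.

Section Bridge.
Variable p : nat.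
Hypothesis pp : prime p.

Lemma Fp_castE (x : 'F_p) : x = (x : nat)%:R.
Proof. by rewrite natr_Zp. Qed.

Lemma Fp_lt (x : 'F_p) : ((x : nat) < p)%N.
Proof. have := ltn_ord x; move: (x : nat) => k; by rewrite Fp_cast. Qed.

Lemma Fp_hcast (x : 'F_p) : exists k : nat, x = k%:R.
Proof. by exists (x : nat); apply: Fp_castE. Qed.

Lemma natF0 k : ((k%:R : 'F_p) == 0) = (p %| k)%N.
Proof. by rewrite (dvdn_pcharf (pchar_Fp pp)). Qed.

Lemma natF_eq k l : ((k%:R : 'F_p) = l%:R) <-> (k %% p = l %% p)%N.
Proof.
split=> [e|e]; first by rewrite -!val_Fp_nat // e.
by rewrite -Fp_nat_mod // e Fp_nat_mod.
Qed.

Lemma natF_small k : (0 < k < p)%N -> (k%:R : 'F_p) != 0.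
Proof.
case/andP=> k0 kp; rewrite natF0; apply/negP => /dvdn_leq.
by rewrite k0 leqNgt kp => /(_ isT).
Qed.

Lemma is_sq_modE w : is_sq_mod p w = sq (w%:R : 'F_p).
Proof.
apply/idP/idP.
  case/existsP=> x /eqP e; apply/sqP; exists (x : nat)%:R.
  by rewrite -natrX; apply/natF_eq; rewrite e.
case/sqP=> y e; apply/existsP; exists (Ordinal (Fp_lt y)) => /=.
apply/eqP/natF_eq; rewrite natrM e -Fp_castE.
by rewrite expr2.
Qed.
End Bridge.

Lemma jacobi_pq p q w : prime p -> prime q -> p != q ->
  jacobi (p * q) w = (legendre p w * legendre q w)%R.
Proof.
move=> pp qp pq.
have p0 : (0 < p)%N by apply: prime_gt0.
have q0 : (0 < q)%N by apply: prime_gt0.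
have hperm : perm_eq (primes (p * q)) [:: p; q].
  apply: uniq_perm; first exact: primes_uniq.
    by rewrite /= inE pq.
  move=> r; rewrite mem_primes !inE muln_gt0 p0 q0 /=.
  apply/idP/idP.
    case/andP=> rp; rewrite Euclid_dvdM // !dvdn_prime2 //.
  by case/orP=> /eqP ->; [rewrite pp dvdn_mulr | rewrite qp dvdn_mull].
rewrite /jacobi (perm_big _ hperm) /= !big_cons big_nil mulr1.
have qp' : (q == p) = false by rewrite eq_sym (negbTE pq).
by rewrite !lognM // !logn_prime // !eqxx (negbTE pq) qp' /= !expr1.
Qed.

Lemma Lset_char p q (w : 'I_(p * q)) : prime p -> prime q -> p != q ->
  Lset (p * q) p w = [&& ~~ (p %| w)%N, ~~ (q %| w)%N & is_sq_mod q w].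
Proof.
move=> pp qp pq.
rewrite /Lset /unitZn jacobi_pq // coprimeMr !(coprime_sym w) !prime_coprime //.
rewrite /legendre.
by case: (p %| w)%N; case: (q %| w)%N; case: (is_sq_mod p w); case: (is_sq_mod q w).
Qed.

Section Main.
Variables p q : nat.
Hypotheses (pp : prime p) (qp : prime q) (pq : p != q) (p7 : (7 <= p)%N) (q7 : (7 <= q)%N).

Let co : coprime p q.
Proof. by rewrite prime_coprime // dvdn_prime2. Qed.

Let n0 : (0 < p * q)%N.
Proof. by rewrite muln_gt0 !prime_gt0. Qed.

Let smallp k : (0 < k < 7)%N -> (k%:R : 'F_p) != 0.
Proof. by case/andP=> k0 k7; apply: natF_small => //; rewrite k0 (leq_trans k7). Qed.
Let smallq k : (0 < k < 7)%N -> (k%:R : 'F_q) != 0.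
Proof. by case/andP=> k0 k7; apply: natF_small => //; rewrite k0 (leq_trans k7). Qed.

Lemma sum_modpq (S : nat) :
  (S %% (p * q) = 0)%N <-> (S%:R : 'F_p) = 0 /\ (S%:R : 'F_q) = 0.
Proof.
have := chinese_remainder co S 0; rewrite !mod0n => e.
split.
  move/eqP; rewrite e => /andP[/eqP e1 /eqP e2].
  by split; [rewrite -(mulr0n (1 : 'F_p)) | rewrite -(mulr0n (1 : 'F_q))]; apply/natF_eq => //; rewrite mod0n.
move=> [e1 e2]; apply/eqP; rewrite e; apply/andP; split; apply/eqP.
  by move: e1; rewrite -(mulr0n (1 : 'F_p)) => /(natF_eq _ _) ; rewrite mod0n; apply.
by move: e2; rewrite -(mulr0n (1 : 'F_q)) => /(natF_eq _ _) ; rewrite mod0n; apply.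
Qed.

Lemma assemble (k : nat) (x : 'I_k -> 'I_(p * q)) (I : {set 'I_k}) :
  I != set0 -> #|[set i in I | ~~ (p %| x i)%N]| != 1%N ->
  (#|[set i in I | ~~ (q %| x i)%N]| == 0%N) || (2 < #|[set i in I | ~~ (q %| x i)%N]|)%N ->
  has_Azs (Lset (p * q) p) x.
Proof.
move=> I0 hP hQ.
pose a i : 'F_p := (x i : nat)%:R.
pose b i : 'F_q := (x i : nat)%:R.
have eP : [set i in I | ~~ (p %| x i)%N] = [set i in I | a i != 0].
  by apply/setP => i; rewrite !inE natF0.
have eQ : [set i in I | ~~ (q %| x i)%N] = [set i in I | b i != 0].
  by apply/setP => i; rewrite !inE natF0.
rewrite eP in hP; rewrite eQ in hQ.
have [u [u0 su]] := Pset (smallp (isT : (0 < 2 < 7)%N)) hP.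
have [r [r0 sr]] := Qset (smallq (isT : (0 < 2 < 7)%N)) (smallq (isT : (0 < 3 < 7)%N))
  (smallq (isT : (0 < 5 < 7)%N)) (@Fp_hcast q) hQ.
pose w i : 'I_(p * q) := Ordinal (ltn_pmod (chinese p q (u i) (r i ^+ 2)) n0).
have wp i : ((w i : nat)%:R : 'F_p) = u i.
  rewrite [RHS](Fp_castE (u i)); apply/natF_eq => //=.
  by rewrite (@modn_dvdm (p * q)) ?dvdn_mulr // chinese_modl.
have wq i : ((w i : nat)%:R : 'F_q) = r i ^+ 2.
  rewrite [RHS](Fp_castE (r i ^+ 2)); apply/natF_eq => //=.
  by rewrite (@modn_dvdm (p * q)) ?dvdn_mull // chinese_modr.
exists I, w; split => //; split.
  move=> i _; rewrite Lset_char // -(natF0 pp) -(natF0 qp) wp wq u0 sqrf_eq0 r0 /=.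
  by rewrite is_sq_modE // wq sqX2.
apply/sum_modpq; split; rewrite natr_sum.
  by under eq_bigr do rewrite natrM wp.
by under eq_bigr do rewrite natrM wq.
Qed.
End Main.

Section Upper.
Variables p q : nat.
Hypotheses (pp : prime p) (qp : prime q) (pq : p != q) (p7 : (7 <= p)%N) (q7 : (7 <= q)%N).

Lemma upper (x : 'I_4 -> 'I_(p * q)) : has_Azs (Lset (p * q) p) x.
Proof.
have asm := @assemble p q pp qp pq p7 q7 4 x.
case: (boolP [exists i, (p %| x i)%N && (q %| x i)%N]) => [/existsP[i /andP[Pi Qi]] | h1].
  apply: (asm [set i]).
  - by apply/set0Pn; exists i; rewrite inE.
  - have -> : [set j in [set i] | ~~ (p %| x j)%N] = set0.
      by apply/setP => j; rewrite !inE; case: eqP => // ->; rewrite Pi.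
    by rewrite cards0.
  - have -> : [set j in [set i] | ~~ (q %| x j)%N] = set0.
      by apply/setP => j; rewrite !inE; case: eqP => // ->; rewrite Qi.
    by rewrite cards0.
case: (boolP [exists i, exists j, [&& i != j, ~~ (p %| x i)%N, ~~ (p %| x j)%N,
          (q %| x i)%N & (q %| x j)%N]]) => [/existsP[i /existsP[j /and5P[ij Pi Pj Qi Qj]]] | h2].
  apply: (asm [set i; j]).
  - by apply/set0Pn; exists i; rewrite !inE eqxx.
  - have -> : [set l in [set i; j] | ~~ (p %| x l)%N] = [set i; j].
      by apply/setP => l; rewrite !inE; case/orP: (orbN (l == i)) => [/eqP -> | /negbTE ->] /=;
         rewrite ?Pi ?eqxx ?orbT //; case: eqP => // ->.
    by rewrite cards2 ij.
  - have -> : [set l in [set i; j] | ~~ (q %| x l)%N] = set0.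
      by apply/setP => l; rewrite !inE; case: eqP => [->|_]; rewrite ?Qi //=; case: eqP => // ->; rewrite Qj.
    by rewrite cards0.
have nb i : (p %| x i)%N -> ~~ (q %| x i)%N.
  by move=> Pi; apply/negP => Qi; move/existsPn: h1 => /(_ i); rewrite Pi Qi.
case: (boolP (#|[set i | (p %| x i)%N]| == 3%N)) => h3.
  apply: (asm [set i | (p %| x i)%N]).
  - by apply/eqP => e; move: h3; rewrite e cards0.
  - have -> : [set l in [set i | (p %| x i)%N] | ~~ (p %| x l)%N] = set0.
      by apply/setP => l; rewrite !inE; case: (p %| x l)%N.
    by rewrite cards0.
  - have -> : [set l in [set i | (p %| x i)%N] | ~~ (q %| x l)%N] = [set i | (p %| x i)%N].
      by apply/setP => l; rewrite !inE; case: (boolP (p %| x l)%N) => //= /nb ->.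
    by rewrite (eqP h3).
have hq : (#|[set i | (q %| x i)%N]| <= 1)%N.
  rewrite leqNgt; apply/negP => /card_gt1P [i [j [Qi Qj ij]]].
  move: Qi Qj; rewrite !inE => Qi Qj.
  move/existsPn: h2 => /(_ i) /existsPn /(_ j); rewrite ij Qi Qj /= !andbT.
  by rewrite (contraL (nb i) Qi) (contraL (nb j) Qj).
apply: (asm [set: 'I_4]).
- by apply/set0Pn; exists ord0; rewrite inE.
- have -> : [set l in [set: 'I_4] | ~~ (p %| x l)%N] = ~: [set i | (p %| x i)%N].
    by apply/setP => l; rewrite !inE.
  rewrite cardsCs setCK card_ord.
  have : (#|[set i | (p %| x i)%N]| <= 4)%N by apply: leq_trans (max_card _) _; rewrite card_ord.
  by move: h3; case: #|_| => [|[|[|[|[|]]]]].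
- have -> : [set l in [set: 'I_4] | ~~ (q %| x l)%N] = ~: [set i | (q %| x i)%N].
    by apply/setP => l; rewrite !inE.
  rewrite cardsCs setCK card_ord.
  by move: hq; case: #|_| => [|[|]].
Qed.
End Upper.

Definition o0 : 'I_3 := @Ordinal 3 0 isT.
Definition o1 : 'I_3 := @Ordinal 3 1 isT.
Definition o2 : 'I_3 := @Ordinal 3 2 isT.

Lemma ord3P (i : 'I_3) : [\/ i = o0, i = o1 | i = o2].
Proof.
case: i => [[|[|[|k]]] hi] //.
- by apply: Or31; apply: val_inj.
- by apply: Or32; apply: val_inj.
- by apply: Or33; apply: val_inj.
Qed.

Lemma sum3 (R : nmodType) (I : {set 'I_3}) (f : 'I_3 -> R) :
  \sum_(i in I) f i = (if o0 \in I then f o0 else 0) + (if o1 \in I then f o1 else 0)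
                      + (if o2 \in I then f o2 else 0).
Proof.
rewrite big_mkcond !big_ord_recl big_ord0 /= addr0 addrA.
have -> : (lift ord0 (lift ord0 ord0) : 'I_3) = o2 by apply: val_inj.
have -> : (lift ord0 ord0 : 'I_3) = o1 by apply: val_inj.
have -> : (ord0 : 'I_3) = o0 by apply: val_inj.
by [].
Qed.

Section Lower.
Variables p q : nat.
Hypotheses (pp : prime p) (qp : prime q) (pq : p != q) (p7 : (7 <= p)%N) (q7 : (7 <= q)%N).

Lemma lower : exists xs : 'I_3 -> 'I_(p * q), ~ has_Azs (Lset (p * q) p) xs.
Proof.
have q2 : (2%:R : 'F_q) != 0 by apply: natF_small => //; rewrite (leq_trans _ q7).
have [z zn] := exists_nonsq q2.
have z0 : z != 0 by apply: contra zn => /eqP ->; apply/sqP; exists 0; rewrite expr0n.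
pose m := ((- z : 'F_q) : nat).
have em : (m%:R : 'F_q) = - z by rewrite /m -Fp_castE.
have mq : (m < q)%N by apply: Fp_lt.
have p1 : (1 < p)%N by apply: prime_gt1.
have q1 : (1 < q)%N by apply: prime_gt1.
have h1 : (1 < p * q)%N by rewrite (leq_trans p1) // leq_pmulr // ltnW.
have hp : (p < p * q)%N by rewrite ltn_Pmulr // ltnW.
have hpm : (p * m < p * q)%N by rewrite ltn_pmul2l // ltnW.
pose xs (i : 'I_3) : 'I_(p * q) :=
  if (i : nat) == 0%N then Ordinal h1 else if (i : nat) == 1%N then Ordinal hp else Ordinal hpm.
exists xs => -[I [w [I0 [wA hs]]]].
have [ep eq] := (sum_modpq pp qp pq _).1 hs.
rewrite natr_sum sum3 /= in ep; rewrite natr_sum sum3 /= in eq.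
have wi i : i \in I -> [&& ~~ (p %| w i)%N, ~~ (q %| w i)%N & is_sq_mod q (w i)].
  by move=> iI; rewrite -Lset_char //; apply: wA.
have o0I : o0 \notin I.
  apply/negP => iI; move: ep; rewrite iI.
  rewrite !natrM (pchar_Fp_0 pp) !mul0r !mulr0 !if_same !addr0 mulr1.
  by apply/eqP; rewrite natF0 //; case/and3P: (wi _ iI).
have P0 : (p%:R : 'F_q) != 0 by rewrite natF0 // dvdn_prime2 // eq_sym.
have M0 : (m%:R : 'F_q) != 0 by rewrite em oppr_eq0.
have ci i : i \in I -> ((w i : nat)%:R : 'F_q) != 0 /\ sq ((w i : nat)%:R : 'F_q).
  move=> iI; case/and3P: (wi _ iI) => _ hq hs'.
  by rewrite natF0 // -is_sq_modE.
move: eq; rewrite (negbTE o0I) add0r !natrM.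
case: (boolP (o1 \in I)) => i1; case: (boolP (o2 \in I)) => i2.
- have [c10 c1s] := ci _ i1; have [c20 c2s] := ci _ i2.
  move=> e; apply/negP: zn; rewrite negbK.
  have -> : z = ((w o1 : nat)%:R : 'F_q) / ((w o2 : nat)%:R).
    apply: (mulIf c20); rewrite mulfVK //.
    apply: (mulfI P0).
    have h : (p%:R : 'F_q) * (w o1 : nat)%:R - p%:R * (z * (w o2 : nat)%:R)
       = (w o1 : nat)%:R * p%:R + (w o2 : nat)%:R * (p%:R * m%:R) by rewrite em; ring.
    by apply/eqP; rewrite eq_sym -subr_eq0 h e.
  by apply: sqM => //; apply: sqV.
- have [c10 _] := ci _ i1; rewrite addr0 => /eqP; rewrite mulf_eq0 (negbTE c10) (negbTE P0).
  by [].
- have [c20 _] := ci _ i2; rewrite add0r => /eqP; rewrite !mulf_eq0 (negbTE c20) (negbTE P0) (negbTE M0).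
  by [].
- move=> _; apply/negP: I0; rewrite negbK; apply/eqP/setP => i; rewrite inE.
  by case: (ord3P i) => ->; apply/negbTE.
Qed.
End Lower.

Theorem theorem3p8 (p' q : nat) :
  prime p' -> prime q -> p' != q -> (7 <= p')%N -> (7 <= q)%N ->
  DA_is (p' * q)%N (Lset (p' * q)%N p') 4.
Proof.
move=> pp qp pq p7 q7; split.
  by move=> x; apply: upper.
move=> k hk; rewrite leqNgt; apply/negP => k4.
have hk3 : (k <= 3)%N by [].
have [xs bad] := lower pp qp pq q7; apply: bad.
pose x' (i : 'I_k) := xs (widen_ord hk3 i).
have [I' [w' [I0 [wA hs]]]] := hk x'.
case/set0Pn: (I0) => i0 i0I.
pose w (j : 'I_3) := w' (insubd i0 (j : nat)).
have winj : injective (widen_ord hk3).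
  by move=> a b /(congr1 val) /= e; apply: val_inj.
have ww i : w (widen_ord hk3 i) = w' i.
  by rewrite /w /= valKd.
exists (widen_ord hk3 @: I'), w; split; last split.
- by apply/set0Pn; exists (widen_ord hk3 i0); apply: imset_f.
- by move=> j /imsetP[i iI ->]; rewrite ww; apply: wA.
- rewrite big_imset /=; last by move=> a b _ _; apply: winj.
  by under eq_bigr => i _ do rewrite ww; exact: hs.
Qed.
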